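(* Assume $\mathcal X\neq\emptyset$ and $\mathcal D\neq\emptyset$, and let $I$ be any interpretation. There is no formula $\psi$ such that, for every assignment $\sigma$, $\sigma,I\models_P\psi$ holds if and only if $\sigma$ obeys the meta-flow axiom.
   Context: Fix a set $\mathcal X$ of synchronisation variables and, for each $x\in\mathcal X$, a distinct data flow variable $\hat x$; put $\hat{\mathcal X}=\{\hat x : x\in\mathcal X\}$. Fix a set $\mathcal F$ of function symbols with arities and a set $\mathcal P$ of predicate symbols with arities, containing a binary equality symbol $=$. Let $\mathcal D$ be the set of ground terms over $\mathcal F$. Formulas and terms: $\psi ::= \top \mid x \mid \psi_1\wedge\psi_2 \mid \neg\psi \mid p(t_1,\dots,t_n)$, $t ::= \hat x \mid f(t_1,\dots,t_n)$. An assignment $\sigma$ is a partial map sending each $x\in\mathcal X$ in its domain to $\{\mathrm{true},\mathrm{false}\}$ and each $\hat x$ in its domain to $\mathcal D$. An interpretation $I$ is a partial map from pairs $(p,(d_1,\dots,d_n))$ ($p$ of arity $n$, $d_i\in\mathcal D$) to $\{\mathrm{true},\mathrm{false}\}$. $\mathrm{Val}_\sigma(\hat x)=\sigma(\hat x)$, $\mathrm{Val}_\sigma(f(t_1,\dots,t_n))=f(\mathrm{Val}_\sigma(t_1),\dots)$, undefined if an argument is undefined. Partial satisfaction $\models_P$ / dissatisfaction $\mathrel{=\!\!|}_P$: $\sigma,I\models_P\top$ always; $\models_P x$ iff $\sigma(x)=\mathrm{true}$; $\models_P\psi_1\wedge\psi_2$ iff both; $\models_P\neg\psi$ iff $\mathrel{=\!\!|}_P\psi$;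 $\models_P p(\vec t)$ iff all $\mathrm{Val}_\sigma(t_i)$ defined and $I(p,(\mathrm{Val}_\sigma(t_i))_i)=\mathrm{true}$; $\mathrel{=\!\!|}_P\top$ never; $\mathrel{=\!\!|}_P x$ iff $\sigma(x)=\mathrm{false}$; $\mathrel{=\!\!|}_P\psi_1\wedge\psi_2$ iff $\mathrel{=\!\!|}_P\psi_1$ or $\mathrel{=\!\!|}_P\psi_2$; $\mathrel{=\!\!|}_P\neg\psi$ iff $\models_P\psi$; $\mathrel{=\!\!|}_P p(\vec t)$ iff all values defined and $I(\dots)=\mathrm{false}$. An assignment $\sigma$ obeys the meta-flow axiom, written $MFA(\sigma)$, if for every $x\in\mathcal X$: whenever $\sigma(\hat x)$ is defined, $\sigma(x)=\mathrm{true}$. *)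

(* Defs.v *)
From Stdlib Require Import List.
Import ListNotations.

(* A signature: synchronisation variables X (the data flow variable hat x is
   represented by [TData x]), function symbols with arities, predicate symbols
   with arities containing a binary equality symbol. *)
Record signature := {
  SVar : Type;
  FSym : Type;
  fArity : FSym -> nat;
  PSym : Type;
  pArity : PSym -> nat;
  eqSym : PSym;
  eqSym_arity : pArity eqSym = 2
}.

Inductive gterm (F : Type) : Type :=
| GApp : F -> list (gterm F) -> gterm F.
Arguments GApp {F} _ _.

Inductive gwf {F : Type} (ar : F -> nat) : gterm F -> Prop :=
| gwf_app f ts : length ts = ar f -> (forall t, In t ts -> gwf ar t) ->
    gwf ar (GApp f ts).

Definition Dom (S : signature) := { d : gterm (FSym S) | gwf (fArity S) d }.

Inductive term (S : signature) : Type :=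
| TData : SVar S -> term S
| TApp : FSym S -> list (term S) -> term S.
Arguments TData {S} _.
Arguments TApp {S} _ _.

Inductive term_wf (S : signature) : term S -> Prop :=
| twf_var x : term_wf S (TData x)
| twf_app f ts : length ts = fArity S f -> (forall t, In t ts -> term_wf S t) ->
    term_wf S (TApp f ts).

Inductive formula (S : signature) : Type :=
| FTop : formula S
| FSync : SVar S -> formula S
| FAnd : formula S -> formula S -> formula S
| FNeg : formula S -> formula S
| FPred : PSym S -> list (term S) -> formula S.
Arguments FTop {S}.
Arguments FSync {S} _.
Arguments FAnd {S} _ _.
Arguments FNeg {S} _.
Arguments FPred {S} _ _.

Fixpoint formula_wf {S : signature} (psi : formula S) : Prop :=
  match psi with
  | FTop => True
  | FSync _ => True
  | FAnd a b => formula_wf a /\ formula_wf b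
  | FNeg a => formula_wf a
  | FPred p ts => length ts = pArity S p /\ (forall t, In t ts -> term_wf S t)
  end.

Record assignment (S : signature) := {
  sync : SVar S -> option bool;
  data : SVar S -> option (Dom S)
}.
Arguments sync {S} _ _.
Arguments data {S} _ _.

(* It is given
   as a function on all argument lists; only well-formed arity-correct tuples
   of elements of D are ever consulted by well-formed formulas. *)
Definition interpretation (S : signature) :=
  PSym S -> list (gterm (FSym S)) -> option bool.

Fixpoint all_some {A : Type} (l : list (option A)) : option (list A) :=
  match l with
  | [] => Some []
  | Some a :: l' => match all_some l' with Some r => Some (a :: r) | None => None end
  | None :: _ => None
  end.

Fixpoint Val {S : signature} (s : assignment S) (t : term S) : option (gterm (FSym S)) :=
  match t with
  | TData x => option_map (@proj1_sig _ _) (data s x)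
  | TApp f ts => option_map (GApp f) (all_some (map (Val s) ts))
  end.

Definition Vals {S : signature} (s : assignment S) (ts : list (term S)) :=
  all_some (map (Val s) ts).

Fixpoint psat {S : signature} (I : interpretation S) (s : assignment S)
  (psi : formula S) : Prop :=
  match psi with
  | FTop => True
  | FSync x => sync s x = Some true
  | FAnd a b => psat I s a /\ psat I s b
  | FNeg a => pdsat I s a
  | FPred p ts => exists ds, Vals s ts = Some ds /\ I p ds = Some true
  end
with pdsat {S : signature} (I : interpretation S) (s : assignment S)
  (psi : formula S) : Prop :=
  match psi with
  | FTop => False
  | FSync x => sync s x = Some false
  | FAnd a b => pdsat I s a \/ pdsat I s b
  | FNeg a => psat I s a
  | FPred p ts => exists ds, Vals s ts = Some ds /\ I p ds = Some false
  end.

Definition MFA {S : signature} (s : assignment S) : Prop :=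
  forall x : SVar S, data s x <> None -> sync s x = Some true.

(* Main.v *)
Require Import Defs.
From Stdlib Require Import List.
Import ListNotations.

Lemma val_mono (S : signature) (s s' : assignment S)
  (H : forall x d, data s x = Some d -> data s' x = Some d) :
  forall t g, Val s t = Some g -> Val s' t = Some g.
Proof.
  fix IH 1. intros [x|f ts] g; simpl.
  - destruct (data s x) eqn:E; simpl; [rewrite (H _ _ E); auto|discriminate].
  - intros Hv.
    assert (K : forall r, all_some (map (Val s) ts) = Some r ->
                          all_some (map (Val s') ts) = Some r).
    { clear Hv. revert ts. fix G 1. intros [|t ts] r; simpl; auto.
      destruct (Val s t) eqn:Et; [|discriminate].
      rewrite (IH t _ Et).
      destruct (all_some (map (Val s) ts)) eqn:E2; [|discriminate].
      intro Hr. rewrite (G ts l E2). exact Hr. }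
    destruct (all_some (map (Val s) ts)) eqn:E; [|discriminate].
    rewrite (K l eq_refl). exact Hv.
Qed.

Lemma sat_mono (S : signature) (I : interpretation S) (s s' : assignment S)
  (H : forall x d, data s x = Some d -> data s' x = Some d)
  (Hs : forall x b, sync s x = Some b -> sync s' x = Some b) :
  forall psi, (psat I s psi -> psat I s' psi) /\ (pdsat I s psi -> pdsat I s' psi).
Proof.
  induction psi as [| x | a [IHa1 IHa2] b [IHb1 IHb2] | a [IH1 IH2] | p ts]; simpl.
  - tauto.
  - split; apply Hs.
  - split; [intros [A B]; auto | intros [A|B]; auto].
  - split; auto.
  - assert (V : forall ds, Vals s ts = Some ds -> Vals s' ts = Some ds).
    { intros ds. unfold Vals. revert ds. induction ts as [|t ts IH]; simpl; auto.
      intro ds. destruct (Val s t) eqn:Et; [|discriminate].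
      rewrite (val_mono S s s' H t _ Et).
      destruct (all_some (map (Val s) ts)) eqn:E2; [|discriminate].
      rewrite (IH l eq_refl). auto. }
    split; intros [ds [A B]]; exists ds; auto.
Qed.

Theorem mainTheorem3 (S : signature)
  (hX : inhabited (SVar S))
  (hD : inhabited (Dom S))
  (I : interpretation S) :
  ~ (exists psi : formula S,
       formula_wf psi /\
       forall s : assignment S, psat I s psi <-> MFA s).
Proof.
  intros [psi [_ Hpsi]]. destruct hX as [x0]. destruct hD as [d].
  set (s0 := {| sync := fun _ => None; data := fun _ => None |} : assignment S).
  set (s1 := {| sync := fun _ => None; data := fun _ => Some d |} : assignment S).
  assert (H0 : psat I s0 psi).
  { apply Hpsi. intros x Hx. exfalso. apply Hx. reflexivity. }
  assert (H1 : psat I s1 psi).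
  { apply (proj1 (sat_mono S I s0 s1 ltac:(simpl; discriminate) ltac:(simpl; discriminate) psi)).
    exact H0. }
  apply Hpsi in H1. specialize (H1 x0). simpl in H1.
  assert (C : (None : option bool) = Some true) by (apply H1; discriminate).
  discriminate C.
Qed.
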